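(* Let $\Pi>0$ and $m$ be a positive integer. Consider MPR interfaces $R_1=\langle\Pi,\Theta_1,m'_1\rangle,\dots,R_p=\langle\Pi,\Theta_p,m'_p\rangle$ with positive integers $m'_i$ and $(m'_i-1)\Pi\le\Theta_i\le m'_i\Pi$. Transform each $R_i$ into the periodic task set consisting of $m'_i-1$ tasks $(\Pi,\Pi,\Pi)$ and one task $(\Pi,\Theta_i-(m'_i-1)\Pi,\Pi)$. Then McNaughton's algorithm successfully schedules the union of all transformed tasks on $m$ identical unit-capacity processors if and only if $$\sum_{i=1}^p\frac{\Theta_i}{\Pi}\le m.$$
   Context: A periodic task $(T,C,T)$ releases a job at every time $jT$, $j\ge0$. The job requires $C$ units of execution in $(jT,(j+1)T]$ and never executes on two processors simultaneously. McNaughton's algorithm, for periodic tasks all having period and deadline $T$, works in each window $(jT,(j+1)T]$ separately. It takes the jobs in a fixed order and fills processor $1$ from time $jT$. Whenever a processor $p$ is filled up to $(j+1)T$, the remainder of the current job is placed on processor $p+1$ starting at time $jT$, and so on. Success means that the schedule: - uses only processors $1,\dots,m$; - never runs a job on two processors simultaneously; - meets all deadlines. *)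

(* Defs.v *)
From HB Require Import structures.
From mathcomp Require Import all_boot all_order all_algebra.
From mathcomp Require Import reals.
Set Implicit Arguments. Unset Strict Implicit. Unset Printing Implicit Defensive.
Import Order.TTheory GRing.Theory Num.Theory.
Local Open Scope ring_scope.

Section McNaughton.
Variable R : realType.

Definition psum (cs : seq R) (k : nat) : R := \sum_(i < k) nth 0 cs i.

(* McNaughton's wrap-around schedule for implicit-deadline tasks all with
   period/deadline T and execution demands cs (in this order).
   mcn_runs T cs k p s : the job of task k (0-based index in cs) released in
   the window (jT,(j+1)T] containing time s runs on processor p (1-based) at
   time s.  Processor p is filled with the portion ((p-1)T, pT] of the
   "unrolled" line on which the jobs are laid out consecutively: job k occupies
   (psum k, psum (k+1)]. This is exactly: fill processor 1 from jT, and when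
   processor p is filled up to (j+1)T, continue on processor p+1 from jT. *)
Definition mcn_runs (T : R) (cs : seq R) (k p : nat) (s : R) : Prop :=
  (k < size cs)%N /\ (1 <= p)%N /\
  exists j : nat, j%:R * T < s <= j.+1%:R * T /\
    psum cs k < (p.-1)%:R * T + (s - j%:R * T) <= psum cs k.+1.

(* Amount of execution that a job of task k receives on processor p within
   its window (length of ((p-1)T, pT] ∩ (psum k, psum (k+1)]). *)
Definition mcn_amount (T : R) (cs : seq R) (k p : nat) : R :=
  Num.max 0 (Num.min (p%:R * T) (psum cs k.+1) - Num.max ((p.-1)%:R * T) (psum cs k)).

Definition mcn_success (T : R) (m : nat) (cs : seq R) : Prop :=
  (forall k p s, mcn_runs T cs k p s -> (p <= m)%N) /\
  (forall k p1 p2 s, mcn_runs T cs k p1 s -> mcn_runs T cs k p2 s -> p1 = p2) /\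
  (* meets all deadlines: every job gets its C units within its window
     on processors 1..m *)
  (forall k, (k < size cs)%N -> \sum_(1 <= p < m.+1) mcn_amount T cs k p = nth 0 cs k).

Definition mpr_transform (Pi Theta : R) (m' : nat) : seq R :=
  nseq m'.-1 Pi ++ [:: Theta - (m'.-1)%:R * Pi].

Definition mpr_union (Pi : R) (pn : nat) (Theta : nat -> R) (mp : nat -> nat) : seq R :=
  flatten [seq mpr_transform Pi (Theta i) (mp i) | i <- iota 0 pn].

End McNaughton.

(* Main.v *)
Require Import Defs.
From HB Require Import structures.
From mathcomp Require Import all_boot all_order all_algebra.
From mathcomp Require Import reals.
From mathcomp Require Import lra.
Import Order.TTheory GRing.Theory Num.Theory.
Local Open Scope ring_scope.

Ltac mm := repeat match goal with
 | |- context [Num.min ?x ?y] => case: (leP x y)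
 | |- context [Num.max ?x ?y] => case: (leP x y)
 end; intros.

Lemma amount_sum (R : realType) (T a b : R) (m : nat) : 0 <= T -> 0 <= a -> a <= b ->
  \sum_(1 <= p < m.+1) Num.max 0 (Num.min (p%:R * T) b - Num.max ((p.-1)%:R * T) a)
  = Num.max 0 (Num.min (m%:R * T) b - a).
Proof.
move=> hT ha hab; elim: m => [|m IH].
  by rewrite big_geq // mul0r; mm; lra.
rewrite big_nat_recr //= IH.
have e : m.+1%:R * T = m%:R * T + T by rewrite -addn1 natrD mulrDl mul1r.
rewrite e.
have hmT : 0 <= m%:R * T by apply: mulr_ge0.
move: hmT; set X := m%:R * T => hmT.
mm; lra.
Qed.

Lemma sum_nseq (R : realType) (n : nat) (a : R) : \sum_(x <- nseq n a) x = n%:R * a.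
Proof.
elim: n => [|n IH]; first by rewrite big_nil mul0r.
by rewrite /= big_cons IH -addn1 natrD mulrDl mul1r addrC.
Qed.

Theorem theorem5 (R : realType) (Pi : R) (m pn : nat) (Theta : nat -> R) (mp : nat -> nat)
  (hPi : 0 < Pi) (hm : (0 < m)%N)
  (hmp : forall i, (i < pn)%N -> (0 < mp i)%N)
  (hlo : forall i, (i < pn)%N -> (mp i).-1%:R * Pi <= Theta i)
  (hhi : forall i, (i < pn)%N -> Theta i <= (mp i)%:R * Pi)
  (cs : seq R) (hcs : perm_eq cs (mpr_union Pi pn Theta mp)) :
  mcn_success Pi m cs <-> \sum_(i < pn) Theta i / Pi <= m%:R.
Proof.
have hin : forall x, x \in cs -> 0 <= x <= Pi.
  move=> x; rewrite (perm_mem hcs) => /flatten_mapP [i].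
  rewrite mem_iota add0n => /andP [_ hi].
  rewrite mem_cat mem_seq1 => /orP [/nseqP [-> _] | /eqP ->].
    by apply/andP; split; lra.
  have := hlo i hi; have := hhi i hi.
  have e : (mp i)%:R = (mp i).-1%:R + 1 :> R by rewrite natr1 prednK // hmp.
  rewrite e mulrDl mul1r => h1 h2; apply/andP; split; lra.
have hnth : forall i, 0 <= nth 0 cs i <= Pi.
  move=> i; case: (ltnP i (size cs)) => h; first by apply: hin; apply: mem_nth.
  by rewrite nth_default //; apply/andP; split; lra.
have hps0 : forall k, 0 <= psum cs k.
  by move=> k; rewrite /psum; apply: sumr_ge0 => i _; case/andP: (hnth i).
have hpsS : forall k, psum cs k.+1 = psum cs k + nth 0 cs k.
  by move=> k; rewrite /psum big_ord_recr.
have hmono0 : forall d k, psum cs k <= psum cs (d + k).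
  move=> d k; elim: d => [|d IH]; first by rewrite add0n.
  by rewrite addSn hpsS; case/andP: (hnth (d + k)) => ? ?; lra.
have hmono : forall k, (k <= size cs)%N -> psum cs k <= psum cs (size cs).
  by move=> k hk; rewrite -(subnK hk); apply: hmono0.
have hsum : psum cs (size cs) = \sum_(i < pn) Theta i.
  have -> : psum cs (size cs) = \sum_(x <- cs) x by rewrite (big_nth 0) big_mkord.
  rewrite (perm_big _ hcs) /mpr_union big_flatten big_map.
  rewrite -(big_mkord xpredT (fun i => Theta i)) /index_iota subn0.
  apply: eq_big_seq => i; rewrite mem_iota add0n => /andP [_ hi].
  by rewrite /mpr_transform big_cat big_seq1 sum_nseq /= addrC subrK.
have hiff : (\sum_(i < pn) Theta i / Pi <= m%:R) = (psum cs (size cs) <= m%:R * Pi).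
  by rewrite hsum -mulr_suml ler_pdivrMr.
rewrite hiff; split.
- case=> _ [_ h3].
  suff : forall k, (k <= size cs)%N -> psum cs k <= m%:R * Pi by apply.
  have hmT : 0 <= m%:R * Pi by apply: mulr_ge0; [exact: ler0n | lra].
  elim => [|k IH] hk; first by rewrite /psum big_ord0.
  have := h3 k hk; rewrite /mcn_amount amount_sum; last first.
  + by rewrite hpsS; case/andP: (hnth k) => ? ?; lra.
  + exact: hps0.
  + lra.
  move: (IH (ltnW hk)) (hps0 k) (hnth k) => h1 h2 /andP [h4 h5].
  rewrite hpsS; mm; lra.
- move=> hS; split; [|split].
  + move=> k p s [hk [hp [j [/andP [hs1 hs2] /andP [hx1 hx2]]]]].
    have h1 := hmono k.+1 hk.
    have : (p.-1)%:R * Pi < m%:R * Pi by lra.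
    rewrite ltr_pM2r // ltr_nat => h.
    by clear -h hp; move: h hp; case: p.
  + move=> k p1 p2 s [hk [hp1 [j1 [/andP [hs1 hs2] /andP [hx1 hx2]]]]]
      [_ [hp2 [j2 [/andP [hs1' hs2'] /andP [hx1' hx2']]]]].
    have ej : j1 = j2.
      apply/eqP; rewrite eqn_leq; apply/andP; split; rewrite leqNgt; apply/negP => hlt.
      * have : j2.+1%:R * Pi <= j1%:R * Pi by rewrite ler_pM2r // ler_nat.
        lra.
      * have : j1.+1%:R * Pi <= j2%:R * Pi by rewrite ler_pM2r // ler_nat.
        lra.
    subst j2.
    move: hx2 hx2'; rewrite hpsS => hx2 hx2'.
    case/andP: (hnth k) => hc1 hc2.
    have e : p1.-1 = p2.-1.
      apply/eqP; rewrite eqn_leq; apply/andP; split; rewrite leqNgt; apply/negP => hlt.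
      * have : (p2.-1).+1%:R * Pi <= (p1.-1)%:R * Pi by rewrite ler_pM2r // ler_nat.
        rewrite -addn1 natrD mulrDl mul1r; lra.
      * have : (p1.-1).+1%:R * Pi <= (p2.-1)%:R * Pi by rewrite ler_pM2r // ler_nat.
        rewrite -addn1 natrD mulrDl mul1r; lra.
    by rewrite -(prednK hp1) -(prednK hp2) e.
  + move=> k hk; rewrite /mcn_amount amount_sum; last first.
    * by rewrite hpsS; case/andP: (hnth k) => ? ?; lra.
    * exact: hps0.
    * lra.
    have := hmono k.+1 hk; rewrite hpsS.
    move: (hps0 k) (hnth k) => h2 /andP [h4 h5]; mm; lra.
Qed.
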